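(* Let $\mathscr{P}^{S_5}_\bullet$ be the group-action model associated with the Petersen graph, and let $\mathscr{Q}_\bullet$ be the family generated by $\mathscr{P}^{S_5}_2\cup\{\mathrm{GHZ}\}$. Then $\mathscr{Q}_\bullet=\mathscr{P}^{S_5}_\bullet$ if and only if the transposition $R$ belongs to $\mathscr{Q}_4$.
   Context: The Petersen graph $\Gamma$ is the Kneser graph $KG_{5,2}$: vertex set $V_\Gamma$ = the $2$-element subsets of $\{1,\dots,5\}$, adjacency = disjointness. Let $W=\mathbb{C}^{V_\Gamma}$ with basis $(e_v)_{v\in V_\Gamma}$; $S_5$ acts by $\pi\cdot e_{\{a,b\}}=e_{\{\pi(a),\pi(b)\}}$ and diagonally on $W^{\otimes n}$. Set $\mathscr{P}_0=\mathbb{C}$, $\mathscr{P}_n=W^{\otimes n}$, and $\mathscr{P}^{S_5}_n$ = the $S_5$-fixed vectors of $\mathscr{P}_n$. $\mathrm{GHZ}=\sum_{v}e_v\otimes e_v\otimes e_v$, $R=\sum_{u,v}e_u\otimes e_v\otimes e_u\otimes e_v$. Operations: tensor product; contraction $C_{k,k+1}:\mathscr{P}_n\to\mathscr{P}_{n-2}$, $C_{k,k+1}(e_{v_1}\otimes\cdots\otimes e_{v_n})=\delta_{v_k,v_{k+1}}e_{v_1}\otimes\cdots\otimes\widehat{e_{v_k}}\otimes\widehat{e_{v_{k+1}}}\otimes\cdots\otimes e_{v_n}$; rotation $\rho(e_{v_1}\otimes\cdots\otimes e_{v_n})=e_{v_2}\otimes\cdots\otimes e_{v_n}\otimes e_{v_1}$.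 The family generated by a set $X$ of tensors is the smallest family $(\mathscr{Q}_n)_{n\ge0}$ of linear subspaces $\mathscr{Q}_n\subseteq\mathscr{P}_n$ containing $X$, with $1\in\mathscr{Q}_0$, closed under tensor product, all contractions $C_{k,k+1}$, and rotation. *)

(* Defs.v *)
From HB Require Import structures.
From mathcomp Require Import all_boot all_order all_algebra all_fingroup.
Set Implicit Arguments. Unset Strict Implicit. Unset Printing Implicit Defensive.
Import GRing.Theory Num.Theory.
Local Open Scope ring_scope.

(* Vertices of the Petersen graph KG_{5,2}: 2-element subsets of {0,..,4}
   (the paper's {1,..,5}, shifted). *)
Definition Vtx : finType := {A : {set 'I_5} | #|A| == 2%N}.

(* S_5 acts on vertices: pi . {a,b} = {pi a, pi b}.  The image always has
   cardinality 2, so the default of insubd is never used. *)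
Definition actV (pi : {perm 'I_5}) (v : Vtx) : Vtx :=
  insubd v (pi @: val v).

Section Tensors.
Variable F : numClosedFieldType.

(* P_n = W^{(x) n}, a tensor is given by its coordinates on the basis
   e_{v_1} (x) ... (x) e_{v_n}, indexed by words of length n. *)
Definition tensor (n : nat) := {ffun n.-tuple Vtx -> F}.

Definition tunit : tensor 0 := [ffun _ => 1].

Definition tprod n m (s : tensor n) (t : tensor m) : tensor (n + m) :=
  [ffun w : (n + m).-tuple Vtx =>
     s [tuple tnth w (lshift m i) | i < n] * t [tuple tnth w (rshift n j) | j < m]].

(* contraction C_{k+1,k+2} (0-indexed positions k, k+1) : P_{n+2} -> P_n,
   for k <= n *)
Definition contr n (k : nat) (t : tensor n.+2) : tensor n :=
  [ffun w : n.-tuple Vtx =>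
     \sum_(u : Vtx) t [tuple nth u (take k w ++ u :: u :: drop k w) i | i < n.+2]].

(* rotation rho(e_{v1}..e_{vn}) = e_{v2}..e_{vn} e_{v1};
   coordinatewise (rho t)(w) = t(rotr 1 w). *)
Definition rot n (t : tensor n) : tensor n :=
  [ffun w : n.-tuple Vtx => t [tuple of rotr 1 w]].

Definition fixedS5 n (t : tensor n) : Prop :=
  forall (pi : {perm 'I_5}) (w : n.-tuple Vtx),
    t [tuple of map (actV pi) w] = t w.

Definition GHZ : tensor 3 :=
  [ffun w : 3.-tuple Vtx =>
     ((tnth w (@Ordinal 3 0 isT) == tnth w (@Ordinal 3 1 isT)) &&
      (tnth w (@Ordinal 3 1 isT) == tnth w (@Ordinal 3 2 isT)))%:R].

Definition Rtr : tensor 4 :=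
  [ffun w : 4.-tuple Vtx =>
     ((tnth w (@Ordinal 4 0 isT) == tnth w (@Ordinal 4 2 isT)) &&
      (tnth w (@Ordinal 4 1 isT) == tnth w (@Ordinal 4 3 isT)))%:R].

Record closed_family (Q : forall n, tensor n -> Prop) : Prop := {
  fam_0 : forall n, Q n 0;
  fam_add : forall n (s t : tensor n), Q n s -> Q n t -> Q n (s + t);
  fam_scale : forall n (c : F) (t : tensor n), Q n t -> Q n [ffun w => c * t w];
  fam_unit : Q 0 tunit;
  fam_prod : forall n m (s : tensor n) (t : tensor m),
      Q n s -> Q m t -> Q (n + m)%N (tprod s t);
  fam_contr : forall n k (t : tensor n.+2),
      (k <= n)%N -> Q n.+2 t -> Q n (contr k t);
  fam_rot : forall n (t : tensor n), Q n t -> Q n (rot t)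
}.

Definition genQ n (t : tensor n) : Prop :=
  forall Q : forall m, tensor m -> Prop,
    closed_family Q ->
    (forall s : tensor 2, fixedS5 s -> Q 2%N s) ->
    Q 3%N GHZ ->
    Q n t.

End Tensors.

(* Main.v *)
Require Import Defs.
From HB Require Import structures.
From mathcomp Require Import all_boot all_order all_algebra all_fingroup.
From mathcomp Require Import zify.
Set Implicit Arguments. Unset Strict Implicit. Unset Printing Implicit Defensive.
Import GRing.Theory Num.Theory.

Local Open Scope ring_scope.

Definition v0 : Vtx.
Proof. exists [set (inord 0 : 'I_5); inord 1]. by rewrite cards2 -(inj_eq val_inj) /= !inordK. Defined.

Section Eqs.
Variable F : numClosedFieldType.

Lemma mktuple_nth_seq n (x : Vtx) (s : seq Vtx) : size s = n ->
  val [tuple nth x s i | i < n] = s.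
Proof.
move=> Hs; apply: (@eq_from_nth _ x); first by rewrite size_tuple.
move=> i; rewrite size_tuple => Hi.
by rewrite (nth_mktuple _ x (Ordinal Hi)).
Qed.

Lemma E_prod n m (f g : seq Vtx -> F) :
  tprod ([ffun w : n.-tuple Vtx => f w]) ([ffun w : m.-tuple Vtx => g w]) =
  [ffun w : (n + m).-tuple Vtx => f (take n w) * g (drop n w)].
Proof.
apply/ffunP => w; rewrite !ffunE; congr (f _ * g _).
  apply: (@eq_from_nth _ v0); first by rewrite size_tuple size_take size_tuple; case: ltnP; lia.
  move=> i; rewrite size_tuple => Hi.
  rewrite (nth_mktuple _ v0 (Ordinal Hi)) nth_take // (tnth_nth v0) //.
apply: (@eq_from_nth _ v0); first by rewrite size_tuple size_drop size_tuple; lia.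
move=> i; rewrite size_tuple => Hi.
by rewrite (nth_mktuple _ v0 (Ordinal Hi)) nth_drop (tnth_nth v0).
Qed.

Lemma E_contr n k (f : seq Vtx -> F) : (k <= n)%N ->
  contr k ([ffun w : n.+2.-tuple Vtx => f w]) =
  [ffun w : n.-tuple Vtx => \sum_(u : Vtx) f (take k w ++ u :: u :: drop k w)].
Proof.
move=> Hk; apply/ffunP => w; rewrite !ffunE; apply: eq_bigr => u _.
rewrite ffunE mktuple_nth_seq //.
by rewrite size_cat /= size_drop size_take size_tuple; case: ltnP; lia.
Qed.

Lemma E_rot n (f : seq Vtx -> F) :
  Defs.rot ([ffun w : n.-tuple Vtx => f w]) = [ffun w : n.-tuple Vtx => f (rotr 1 w)].
Proof. by apply/ffunP => w; rewrite !ffunE. Qed.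

Definition tf n (t : tensor F n) (s : seq Vtx) : F := t [tuple nth v0 s i | i < n].

Lemma tfK n (t : tensor F n) : [ffun w : n.-tuple Vtx => tf t w] = t.
Proof.
apply/ffunP => w; rewrite ffunE /tf; congr (t _); apply: val_inj.
by rewrite mktuple_nth_seq // size_tuple.
Qed.

End Eqs.

Section SumLemmas.
Variable F : numClosedFieldType.
Lemma sum_delta (T : finType) (p : T) (G : T -> F) :
  \sum_(u : T) G u * (u == p)%:R = G p.
Proof.
rewrite (bigD1 p) //= eqxx mulr1 big1 ?addr0 // => u /negbTE ->; by rewrite mulr0.
Qed.
Lemma sum_delta_l (T : finType) (p : T) (G : T -> F) :
  \sum_(u : T) (u == p)%:R * G u = G p.
Proof. rewrite -[RHS](sum_delta p); apply: eq_bigr => u _; by rewrite mulrC. Qed.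
Lemma natr_and (b1 b2 : bool) : ((b1 && b2)%:R : F) = b1%:R * b2%:R.
Proof. by case: b1; case: b2; rewrite ?mulr1 ?mulr0. Qed.
End SumLemmas.

Lemma take_cat_n (T : Type) (a b : seq T) n k : size a = n -> take (n + k) (a ++ b) = a ++ take k b.
Proof. move=> <-; by rewrite take_cat ltnNge leq_addr /= addKn. Qed.
Lemma drop_cat_n (T : Type) (a b : seq T) n k : size a = n -> drop (n + k) (a ++ b) = drop k b.
Proof. move=> <-; by rewrite drop_cat ltnNge leq_addr /= addKn. Qed.
Lemma take_cat_n0 (T : Type) (a b : seq T) n : size a = n -> take n (a ++ b) = a.
Proof. move=> <-; by rewrite take_size_cat. Qed.
Lemma drop_cat_n0 (T : Type) (a b : seq T) n : size a = n -> drop n (a ++ b) = b.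
Proof. move=> <-; by rewrite drop_size_cat. Qed.

Lemma split_last2 (T : Type) (x : T) (s : seq T) n : size s = n.+2 ->
  s = take n s ++ [:: nth x s n; nth x s n.+1].
Proof.
move=> Hs; apply: (@eq_from_nth _ x); first by rewrite size_cat size_take Hs /=; case: ltnP; lia.
move=> i; rewrite Hs => Hi; rewrite nth_cat size_take Hs ltnS leqnSn.
case: ltnP => H1; first by rewrite nth_take.
have [->|->] : i = n \/ i = n.+1 by lia.
  by rewrite subnn.
by rewrite subSnn.
Qed.

Lemma split_last1 (T : Type) (x : T) (s : seq T) n : size s = n.+1 ->
  s = take n s ++ [:: nth x s n].
Proof.
move=> Hs; apply: (@eq_from_nth _ x); first by rewrite size_cat size_take Hs /=; case: ltnP; lia.
move=> i; rewrite Hs => Hi; rewrite nth_cat size_take Hs ltnSn.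
case: ltnP => H1; first by rewrite nth_take.
have -> : i = n by lia.
by rewrite subnn.
Qed.

Section QFam.
Variable F : numClosedFieldType.
Variable Q : forall n, tensor F n -> Prop.
Hypothesis HQ : closed_family Q.
Hypothesis HG : @Q 3 (GHZ F).
Hypothesis HR : @Q 4 (Rtr F).

Definition QF n (f : seq Vtx -> F) := @Q n [ffun w : n.-tuple Vtx => f w].

Lemma QF_ext n f g : (forall s, size s = n -> f s = g s) -> QF n f -> QF n g.
Proof.
move=> H; rewrite /QF; congr (@Q n _); apply/ffunP => w; rewrite !ffunE H //.
by rewrite size_tuple.
Qed.

Lemma QF_cast n m f : n = m -> QF n f -> QF m f.
Proof. by move=> ->. Qed.

Lemma QF_add n f g : QF n f -> QF n g -> QF n (fun s => f s + g s).
Proof.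
move=> Hf Hg; have := fam_add HQ Hf Hg; congr (@Q n _); apply/ffunP => w; by rewrite !ffunE.
Qed.

Lemma QF_scale n c f : QF n f -> QF n (fun s => c * f s).
Proof.
move=> Hf; have := fam_scale HQ c Hf; congr (@Q n _); apply/ffunP => w; by rewrite !ffunE.
Qed.

Lemma QF_zero n : QF n (fun _ => 0).
Proof. have := fam_0 HQ n; congr (@Q n _); apply/ffunP => w; by rewrite !ffunE. Qed.

Lemma QF_prod n m f g : QF n f -> QF m g ->
  QF (n + m) (fun s => f (take n s) * g (drop n s)).
Proof. move=> Hf Hg; have := fam_prod HQ Hf Hg; by rewrite /QF E_prod. Qed.

Lemma QF_contr n k f : (k <= n)%N -> QF n.+2 f ->
  QF n (fun s => \sum_(u : Vtx) f (take k s ++ u :: u :: drop k s)).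
Proof. move=> Hk Hf; have := fam_contr HQ Hk Hf; by rewrite /QF E_contr. Qed.

Lemma QF_rot n f : QF n f -> QF n (fun s => f (rotr 1 s)).
Proof. move=> Hf; have := fam_rot HQ Hf; by rewrite /QF E_rot. Qed.

Lemma QF_GHZ : QF 3 (fun s => ((nth v0 s 0 == nth v0 s 1) && (nth v0 s 1 == nth v0 s 2))%:R).
Proof. move: HG; congr (@Q 3 _); apply/ffunP => w; by rewrite !ffunE !(tnth_nth v0). Qed.

Lemma QF_R : QF 4 (fun s => ((nth v0 s 0 == nth v0 s 2) && (nth v0 s 1 == nth v0 s 3))%:R).
Proof. move: HR; congr (@Q 4 _); apply/ffunP => w; by rewrite !ffunE !(tnth_nth v0). Qed.

Lemma QF_unit : QF 0 (fun _ => 1).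
Proof. move: (fam_unit HQ); congr (@Q 0 _); apply/ffunP => w; by rewrite !ffunE. Qed.

Lemma QF_ones : QF 1 (fun _ => 1).
Proof.
have := QF_contr (k:=0) (leq0n 1) QF_GHZ.
apply: QF_ext => s Hs /=; rewrite -[RHS](sum_delta (nth v0 s 0) (fun _ => 1)).
apply: eq_bigr => u _; rewrite take0 drop0 /= eqxx /= eq_sym mul1r //.
Qed.

Lemma QF_const n c : QF n (fun _ => c).
Proof.
elim: n => [|n IH]; first by have := QF_scale c QF_unit; apply: QF_ext => s _; rewrite mulr1.
have := QF_prod IH QF_ones; rewrite addn1; apply: QF_ext => s _; by rewrite mulr1.
Qed.

End QFam.

Local Close Scope ring_scope.


Definition resub (phi : nat -> nat) m (s : seq Vtx) := map (fun i => nth v0 s (phi i)) (iota 0 m).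

Lemma size_resub phi m s : size (resub phi m s) = m.
Proof. by rewrite size_map size_iota. Qed.

Lemma nth_resub phi m s i : (i < m)%N -> nth v0 (resub phi m s) i = nth v0 s (phi i).
Proof. move=> Hi; by rewrite (nth_map 0) ?size_iota // nth_iota. Qed.

Lemma resub_eq phi m s L : size L = m -> (forall i, (i < m)%N -> nth v0 L i = nth v0 s (phi i)) ->
  resub phi m s = L.
Proof.
move=> HL H; apply: (@eq_from_nth _ v0); first by rewrite size_resub.
move=> i; rewrite size_resub => Hi; by rewrite nth_resub // H.
Qed.


Section TkDr.
Variable T : Type.
Implicit Types (a b : seq T) (x y : T).
Lemma tk1 a x b : take (size a).+1 (a ++ x :: b) = a ++ [:: x].
Proof. by elim: a => [|z a IH] /=; [rewrite take0 | rewrite IH]. Qed.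
Lemma tk2 a x y b : take (size a).+2 (a ++ x :: y :: b) = a ++ [:: x; y].
Proof. by elim: a => [|z a IH] /=; [rewrite take0 | rewrite IH]. Qed.
Lemma dr1 a x b : drop (size a).+1 (a ++ x :: b) = b.
Proof. by elim: a => [|z a IH] /=; [rewrite drop0 | rewrite IH]. Qed.
Lemma dr2 a x y b : drop (size a).+2 (a ++ x :: y :: b) = b.
Proof. by elim: a => [|z a IH] /=; [rewrite drop0 | rewrite IH]. Qed.
End TkDr.

Lemma nth_cat_sz (a b : seq Vtx) j : nth v0 (a ++ b) (size a + j) = nth v0 b j.
Proof. by rewrite nth_cat ltnNge leq_addr /= addKn. Qed.
Lemma nth_cat_sz0 (a b : seq Vtx) : nth v0 (a ++ b) (size a) = nth v0 b 0.
Proof. by rewrite -[X in nth _ _ X]addn0 nth_cat_sz. Qed.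
Lemma nth_cat_sz1 (a b : seq Vtx) : nth v0 (a ++ b) (size a).+1 = nth v0 b 1.
Proof. by rewrite -addn1 nth_cat_sz. Qed.
Lemma nth_cat_sz2 (a b : seq Vtx) : nth v0 (a ++ b) (size a).+2 = nth v0 b 2.
Proof. by rewrite -addn2 nth_cat_sz. Qed.
Lemma nth_cat_lt (a b : seq Vtx) j : (j < size a)%N -> nth v0 (a ++ b) j = nth v0 a j.
Proof. by move=> H; rewrite nth_cat H. Qed.

Section Prim.
Variable F : numClosedFieldType.
Variable Q : forall n, tensor F n -> Prop.
Hypothesis HQ : closed_family Q.
Hypothesis HG : @Q 3 (GHZ F).
Hypothesis HR : @Q 4 (Rtr F).

Definition Pm m n phi := forall f, QF Q m f -> QF Q n (fun s => f (resub phi m s)).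

Lemma swaplast n : Pm n.+2 n.+2 (fun i => if i == n then n.+1 else if i == n.+1 then n else i).
Proof.
move=> f Hf.
have H1 := QF_prod HQ Hf (QF_R HR).
have H2 := QF_contr HQ (n:=n+4) (k:=n.+1) (ltac:(lia)) (QF_cast (n:=n.+2+4) (m:=(n+4).+2) (ltac:(lia)) H1).
have H3 := QF_contr HQ (n:=n.+2) (k:=n) (ltac:(lia)) (QF_cast (n:=n+4) (m:=n.+2.+2) (ltac:(lia)) H2).
apply: QF_ext H3 => s Hs.
rewrite (split_last2 v0 Hs); set a := take n s; set p := nth v0 s n; set q := nth v0 s n.+1.
have Ha : size a = n by rewrite /a size_take Hs; case: ltnP; lia.
rewrite -Ha take_size_cat // drop_size_cat //.
under eq_bigr => u _ do under eq_bigr => u0 _ do rewrite tk1 dr1 -catA /= tk2 dr2 /=.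
under eq_bigr => u _ do under eq_bigr => u0 _ do rewrite natr_and mulrA mulrAC.
under eq_bigr => u _ do rewrite sum_delta.
rewrite sum_delta; congr f.
symmetry; apply: resub_eq.
  by rewrite size_cat /= addn2.
move=> i Hi; case: (ltnP i (size a)) => Hia.
  by rewrite !nth_cat_lt // ifN ?ifN //; apply/negP => /eqP; lia.
have [->|->] : i = size a \/ i = (size a).+1 by lia.
  by rewrite eqxx nth_cat_sz0 nth_cat_sz1.
by rewrite eqxx ifN; [rewrite nth_cat_sz0 nth_cat_sz1 | apply/negP => /eqP; lia].
Qed.

Lemma mergelast n : Pm n.+2 n.+1 (fun i => if i == n.+1 then n else i).
Proof.
move=> f Hf.
have H1 := QF_prod HQ Hf (QF_GHZ HG).
have H2 := QF_contr HQ (n:=n+3) (k:=n.+1) (ltac:(lia)) (QF_cast (n:=n.+2+3) (m:=(n+3).+2) (ltac:(lia)) H1).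
have H3 := QF_contr HQ (n:=n.+1) (k:=n) (ltac:(lia)) (QF_cast (n:=n+3) (m:=n.+1.+2) (ltac:(lia)) H2).
apply: QF_ext H3 => s Hs.
rewrite (split_last1 v0 Hs); set a := take n s; set y := nth v0 s n.
have Ha : size a = n by rewrite /a size_take Hs; case: ltnP; lia.
rewrite -Ha take_size_cat // drop_size_cat //.
under eq_bigr => u _ do under eq_bigr => u0 _ do rewrite tk1 dr1 -catA /= tk2 dr2 /=.
under eq_bigr => u _ do under eq_bigr => u0 _ do rewrite natr_and mulrA mulrAC.
under eq_bigr => u _ do rewrite sum_delta.
rewrite sum_delta; congr f.
symmetry; apply: resub_eq.
  by rewrite !size_cat /= addn2.
move=> i Hi; case: (ltnP i (size a)) => Hia.
  by rewrite !nth_cat_lt // ifN //; apply/negP => /eqP; lia.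
have [->|->] : i = size a \/ i = (size a).+1 by lia.
  by rewrite ifN ?nth_cat_sz0 //; apply/negP => /eqP; lia.
by rewrite eqxx nth_cat_sz0 nth_cat_sz1.
Qed.

Lemma prepend n k : Pm k (n + k) (fun i => i + n).
Proof.
move=> f Hf; have := QF_prod HQ (QF_const HQ HG n 1) Hf.
apply: QF_ext => s Hs; rewrite mul1r; congr f; symmetry; apply: resub_eq.
  by rewrite size_drop Hs addKn.
by move=> i Hi; rewrite nth_drop addnC.
Qed.

Lemma sumlast n f : QF Q n.+1 f -> QF Q n (fun s => (\sum_(u : Vtx) f (rcons s u))%R).
Proof.
move=> Hf; have H1 := QF_prod HQ Hf (QF_ones HQ HG).
have := QF_contr HQ (n:=n) (k:=n) (leqnn n) (QF_cast (n:=n.+1+1) (m:=n.+2) (ltac:(lia)) H1).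
apply: QF_ext => s Hs; apply: eq_bigr => u _.
have -> : take n s = s by rewrite take_oversize ?Hs.
have -> : drop n s = [::] by rewrite drop_oversize ?Hs.
by rewrite -Hs tk1 cats1 mulr1.
Qed.

Lemma rotP n : Pm n n (fun i => if i == 0%N then n.-1 else i.-1).
Proof.
move=> f Hf; have := QF_rot HQ Hf; apply: QF_ext => s Hs; congr f.
clear Hf; case: n Hs => [|n] Hs.
  by move/size0nil: Hs => ->.
rewrite (split_last1 v0 Hs); set a := take n s; set y := nth v0 s n.
have Ha : size a = n by rewrite /a size_take Hs; case: ltnP; lia.
have -> : rotr 1 (a ++ [:: y]) = y :: a.
  by rewrite /rotr size_cat /= addn1 subn1 /= /rot drop_size_cat // take_size_cat.
symmetry; apply: resub_eq; first by rewrite /= Ha.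
move=> i Hi.
case: i Hi => [|i] Hi /=; first by rewrite -Ha nth_cat_sz0.
by rewrite nth_cat_lt //; lia.
Qed.

End Prim.


Ltac arith := cbv beta; repeat match goal with
  | |- context [if ?b then _ else _] =>
     lazymatch b with context [if _ then _ else _] => fail | _ => case: (boolP b) => ? end
  end; lia.

Section PmAlg.
Variable F : numClosedFieldType.
Variable Q : forall n, tensor F n -> Prop.
Hypothesis HQ : closed_family Q.
Hypothesis HG : @Q 3 (GHZ F).
Hypothesis HR : @Q 4 (Rtr F).

Local Notation Pm := (Pm Q).

Lemma Pm_comp m n p phi psi : (forall i, (i < m)%N -> (phi i < n)%N) ->
  Pm m n phi -> Pm n p psi -> Pm m p (fun i => psi (phi i)).
Proof.
move=> Hb H1 H2 f Hf; have := H2 _ (H1 _ Hf); apply: QF_ext => s Hs; congr f.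
apply: resub_eq; first by rewrite size_resub.
by move=> i Hi; rewrite nth_resub // nth_resub // Hb.
Qed.

Lemma Pm_ext m n phi psi : Pm m n phi -> (forall i, (i < m)%N -> phi i = psi i) -> Pm m n psi.
Proof.
move=> H He f Hf; have := H _ Hf; apply: QF_ext => s Hs; congr f.
apply: resub_eq; first by rewrite size_resub.
by move=> i Hi; rewrite nth_resub // He.
Qed.

Lemma Pm_id n : Pm n n id.
Proof.
move=> f Hf; apply: QF_ext Hf => s Hs; congr f; symmetry; by apply: resub_eq.
Qed.

Lemma Pm_cast m n m' n' phi : m = m' -> n = n' -> Pm m n phi -> Pm m' n' phi.
Proof. by move=> -> ->. Qed.

Definition ck N k i := if (k <= i)%N then (i - k)%N else (i + N - k)%N.

Lemma rotk N k : (k <= N)%N -> Pm N N (ck N k).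
Proof.
elim: k => [|k IH] Hk.
  have H0 := Pm_id (n:=N); apply: (Pm_ext H0) => i Hi; rewrite /ck; arith.
have H := Pm_comp (m := N) (phi := ck N k) (n := N) (fun i Hi => ltac:(rewrite /ck /=; arith)) (IH (ltnW Hk)) (rotP HQ (n:=N)).
apply: (Pm_ext H) => i Hi; rewrite /ck; arith.
Qed.

Lemma swap_at N i : (i.+1 < N)%N ->
  Pm N N (fun x => if x == i then i.+1 else if x == i.+1 then i else x).
Proof.
case: N => [|[|n]] Hi //.
have H1 := rotk (N:=n.+2) (k:=i.+2) Hi.
have H2 := swaplast HQ HR (n:=n).
have H3 := rotk (N:=n.+2) (k:=n.+2 - i.+2) (leq_subr _ _).
have H12 := Pm_comp (m := n.+2) (phi := ck n.+2 i.+2) (n := n.+2) (fun x Hx => ltac:(rewrite /ck /=; arith)) H1 H2.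
have H123 := Pm_comp (m := n.+2) (n := n.+2) (phi := fun x => if ck n.+2 i.+2 x == n then n.+1 else if ck n.+2 i.+2 x == n.+1 then n else ck n.+2 i.+2 x) (fun x Hx => ltac:(rewrite /ck /=; arith)) H12 H3.
apply: (Pm_ext H123) => x Hx; rewrite /ck; arith.
Qed.

Lemma merge_adj n j : (j.+1 < n.+2)%N ->
  Pm n.+2 n.+1 (fun x => if (x <= j)%N then x else x.-1).
Proof.
move=> Hj.
have H1 := rotk (N:=n.+2) (k:=j.+2) Hj.
have H2 := mergelast HQ HG (n:=n).
have H3 := rotk (N:=n.+1) (k:=n - j) (ltac:(lia)).
have H12 := Pm_comp (m := n.+2) (phi := ck n.+2 j.+2) (n := n.+2) (fun x Hx => ltac:(rewrite /ck /=; arith)) H1 H2.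
have H123 := Pm_comp (m := n.+2) (n := n.+1) (phi := fun x => if ck n.+2 j.+2 x == n.+1 then n else ck n.+2 j.+2 x) (fun x Hx => ltac:(rewrite /ck /=; arith)) H12 H3.
apply: (Pm_ext H123) => x Hx; rewrite /ck; arith.
Qed.

Definition mv p d x := if (x < p)%N then x else if x == (p + d)%N then p
  else if (x < p + d)%N then x.+1 else x.

Lemma move_leg N p d : (p + d < N)%N -> Pm N N (mv p d).
Proof.
elim: d => [|d IH] Hd.
  apply: (Pm_ext (Pm_id (n:=N))) => i Hi; rewrite /mv; arith.
have Hd1 : (p + d < N)%N by lia.
have Hd2 : ((p + d).+1 < N)%N by lia.
have H := Pm_comp (m := N) (n := N) (phi := fun x => if x == (p+d)%N then (p+d).+1 else if x == (p+d).+1 then (p+d)%N else x) (fun x Hx => ltac:(arith)) (swap_at (i:=(p+d)%N) Hd2) (IH Hd1).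
apply: (Pm_ext H) => i Hi; rewrite /mv; arith.
Qed.

Lemma merge_at n k j : (j < n)%N ->
  Pm (n.+1 + k) (n + k) (fun x => if (x < n)%N then x else if x == n then j else x.-1).
Proof.
move=> Hj.
have H1 := move_leg (N:=(n.+1+k)%N) (p:=j.+1) (d:=(n - j.+1)%N) (ltac:(lia)).
have Hj2 : (j.+1 < (n + k).-1.+2)%N by lia.
have H2' := merge_adj (n:=(n + k).-1) Hj2.
have E1 : ((n + k).-1.+2 = n.+1 + k)%N by lia.
have E2 : ((n + k).-1.+1 = n + k)%N by lia.
have H2 := Pm_cast E1 E2 H2'.
have H := Pm_comp (m := (n.+1+k)%N) (n := (n.+1+k)%N) (phi := mv j.+1 (n - j.+1)) (fun x Hx => ltac:(rewrite /mv /=; arith)) H1 H2.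
apply: (Pm_ext H) => i Hi; rewrite /mv; arith.
Qed.

Lemma Hsub m : forall k n phi, (forall i, (i < m)%N -> (phi i < n)%N) ->
  Pm (m + k) (n + k) (fun i => if (i < m)%N then phi i else (i - m + n)%N).
Proof.
elim: m => [|m IH] k n phi Hphi.
  apply: (Pm_ext (prepend HQ HG n (k:=k))) => i Hi /=; lia.
have H1 := IH k.+1 n phi (fun i Hi => Hphi i (ltac:(lia))).
have H2 := merge_at (k:=k) (Hphi m (ltnSn m)).
have E1 : (m + k.+1 = m.+1 + k)%N by lia.
have E2 : (n + k.+1 = n.+1 + k)%N by lia.
have H1' := Pm_cast E1 E2 H1.
have Hb : forall i, (i < m.+1 + k)%N -> ((if (i < m)%N then phi i else (i - m + n)%N) < n.+1 + k)%N.
  move=> i Hi; case: (ltnP i m) => H; last by lia.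
  have Hl : (i < m.+1)%N by lia.
  have := Hphi i Hl; lia.
have H := Pm_comp Hb H1' H2.
apply: (Pm_ext H) => i Hi /=.
case: (ltngtP i m) => Him.
- have Hp := Hphi i (ltac:(lia)); move: Hp; set p := phi i => Hp; arith.
- arith.
- subst i; arith.
Qed.

Lemma QF_sub m n phi f : (forall i, (i < m)%N -> (phi i < n)%N) ->
  QF Q m f -> QF Q n (fun s => f (resub phi m s)).
Proof.
move=> Hphi; have H := Hsub (k:=0) Hphi.
have H' := Pm_cast (addn0 m) (addn0 n) H.
have H'' : Pm m n phi by apply: (Pm_ext H') => i Hi; rewrite Hi.
exact: H''.
Qed.

End PmAlg.

Section Derived.
Variable F : numClosedFieldType.
Variable Q : forall n, tensor F n -> Prop.
Hypothesis HQ : closed_family Q.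
Hypothesis HG : @Q 3 (GHZ F).
Hypothesis HR : @Q 4 (Rtr F).
Local Open Scope ring_scope.

Lemma QF_mul n (f g : seq Vtx -> F) : QF Q n f -> QF Q n g -> QF Q n (fun s => f s * g s).
Proof.
move=> Hf Hg; have H := QF_prod HQ Hf Hg.
have Hb : forall i, (i < n + n)%N -> ((fun i => if (i < n)%N then i else (i - n)%N) i < n)%N.
  move=> i Hi; arith.
have := QF_sub HQ HG HR Hb H; apply: QF_ext => s Hs.
have -> : resub (fun i => if (i < n)%N then i else (i - n)%N) (n + n) s = s ++ s.
  apply: resub_eq; first by rewrite size_cat Hs.
  move=> i Hi; rewrite nth_cat Hs; case: ltnP => // H1.
by rewrite -Hs take_size_cat // drop_size_cat.
Qed.

Lemma QF_bigprod (I : Type) (r : seq I) N (G : I -> seq Vtx -> F) :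
  (forall x, QF Q N (G x)) -> QF Q N (fun s => \prod_(x <- r) G x s).
Proof.
move=> H; elim: r => [|x r IH].
  by have := QF_const HQ HG N (1 : F); apply: QF_ext => s _; rewrite big_nil.
have := QF_mul (H x) IH.
by apply: QF_ext => s _; rewrite big_cons.
Qed.

Lemma QF_bigsum (I : Type) (r : seq I) N (G : I -> seq Vtx -> F) :
  (forall x, QF Q N (G x)) -> QF Q N (fun s => \sum_(x <- r) G x s).
Proof.
move=> H; elim: r => [|x r IH].
  by have := QF_zero HQ N; apply: QF_ext => s _; rewrite big_nil.
have := QF_add HQ (H x) IH.
by apply: QF_ext => s _; rewrite big_cons.
Qed.

Lemma place2 N i j (G : Vtx -> Vtx -> F) : (i < N)%N -> (j < N)%N ->
  QF Q 2 (fun s => G (nth v0 s 0) (nth v0 s 1)) ->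
  QF Q N (fun s => G (nth v0 s i) (nth v0 s j)).
Proof.
move=> Hi Hj H.
have Hb : forall k, (k < 2)%N -> ((fun k => if k == 0%N then i else j) k < N)%N.
  by move=> k Hk; arith.
by have := QF_sub HQ HG HR Hb H; apply: QF_ext.
Qed.

Lemma place3 N i j k (G : Vtx -> Vtx -> Vtx -> F) : (i < N)%N -> (j < N)%N -> (k < N)%N ->
  QF Q 3 (fun s => G (nth v0 s 0) (nth v0 s 1) (nth v0 s 2)) ->
  QF Q N (fun s => G (nth v0 s i) (nth v0 s j) (nth v0 s k)).
Proof.
move=> Hi Hj Hk H.
have Hb : forall x, (x < 3)%N -> ((fun x => if x == 0%N then i else if x == 1%N then j else k) x < N)%N.
  by move=> x Hx; arith.
by have := QF_sub HQ HG HR Hb H; apply: QF_ext.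
Qed.

End Derived.

Lemma all_iota_lt (P : pred nat) n : all P (iota 0 n) -> forall k, k < n -> P k.
Proof. move/allP => H k Hk; apply: H; by rewrite mem_iota. Qed.

Lemma all2_iota (P : nat -> nat -> bool) n m :
  all (fun k => all (P k) (iota 0 m)) (iota 0 n) -> forall k l, k < n -> l < m -> P k l.
Proof. move=> H k l Hk Hl; exact: (all_iota_lt (all_iota_lt H Hk) Hl). Qed.

Section SetLemmas.
Variable T : finType.
Implicit Types x y : T.

Lemma set2_eq x y x' y' : x != y -> x' != y' ->
  ([set x; y] == [set x'; y']) = ((x == x') && (y == y')) || ((x == y') && (y == x')).
Proof.
move=> Hxy Hxy'; apply/eqP/idP.
  move/setP => H.
  have Hx : (x == x') || (x == y') by have := H x; rewrite !inE eqxx.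
  have Hy : (y == x') || (y == y') by have := H y; rewrite !inE eqxx orbT.
  have Hyx : (y == x) = false by rewrite eq_sym (negbTE Hxy).
  case/orP: Hx => /eqP Ex; subst.
    by move: Hy; rewrite Hyx /= => ->; rewrite eqxx.
  by move: Hy; rewrite Hyx orbF => ->; rewrite eqxx orbT.
by case/orP => /andP [/eqP <- /eqP <-] //; rewrite setUC.
Qed.

Lemma set2_disj x y x' y' :
  [disjoint [set x; y] & [set x'; y']] = [&& x != x', x != y', y != x' & y != y'].
Proof.
apply/idP/idP.
  move=> H; have Hx := disjointFr H (setU11 x [set y]).
  have Hy : y \in [set x; y] by rewrite !inE eqxx orbT.
  have Hy' := disjointFr H Hy.
  move: Hx Hy'; rewrite !inE => /norP [-> ->] /norP [-> ->] //.
move/and4P => [H1 H2 H3 H4]; rewrite disjoint_subset; apply/subsetP => z.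
rewrite !inE => /orP [] /eqP ->; rewrite negb_or; apply/andP; split => //.
Qed.

Lemma imset2 (f : T -> T) x y : f @: [set x; y] = [set f x; f y].
Proof. by rewrite imsetU1 imset_set1. Qed.
End SetLemmas.

Definition cA := [:: 0;0;0;0;1;1;1;2;2;3].
Definition cB := [:: 1;2;3;4;2;3;4;3;4;4].
Definition ca k := nth 0 cA k.
Definition cb k := nth 0 cB k.
Definition mkV k : Vtx := insubd v0 [set (inord (ca k) : 'I_5); inord (cb k)].

Lemma inord_eq a b : a < 5 -> b < 5 -> ((inord a : 'I_5) == inord b) = (a == b).
Proof. by move=> Ha Hb; rewrite -(inj_eq val_inj) /= !inordK. Qed.

Lemma code_ok k : k < 10 -> [&& ca k < 5, cb k < 5 & ca k != cb k].
Proof. by apply: (all_iota_lt (P := fun k => [&& ca k < 5, cb k < 5 & ca k != cb k])). Qed.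

Lemma val_mkV k : k < 10 -> val (mkV k) = [set (inord (ca k) : 'I_5); inord (cb k)].
Proof.
move=> Hk; case/and3P: (code_ok Hk) => H1 H2 H3.
by rewrite val_insubd cards2 inord_eq // H3.
Qed.

Definition dc k l := [&& ca k != ca l, ca k != cb l, cb k != ca l & cb k != cb l].

Lemma eq_mkV k l : k < 10 -> l < 10 -> (mkV k == mkV l) = (k == l).
Proof.
move=> Hk Hl; rewrite -val_eqE /= !val_mkV //.
case/and3P: (code_ok Hk) => H1 H2 H3; case/and3P: (code_ok Hl) => H4 H5 H6.
rewrite set2_eq; [|by rewrite inord_eq|by rewrite inord_eq].
rewrite !inord_eq //.
apply/eqP; clear H1 H2 H3 H4 H5 H6; move: k l Hk Hl; apply: (all2_iota (P := fun k l => (((ca k == ca l) && (cb k == cb l)) || ((ca k == cb l) && (cb k == ca l))) == (k == l))).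
by [].
Qed.

Lemma disj_mkV k l : k < 10 -> l < 10 -> [disjoint val (mkV k) & val (mkV l)] = dc k l.
Proof.
move=> Hk Hl; rewrite !val_mkV // set2_disj.
case/and3P: (code_ok Hk) => H1 H2 H3; case/and3P: (code_ok Hl) => H4 H5 H6.
by rewrite !inord_eq.
Qed.

Definition code x y := find (fun k => ((ca k == x) && (cb k == y)) || ((ca k == y) && (cb k == x))) (iota 0 10).

Lemma code_spec x y : x < 5 -> y < 5 -> x != y ->
  code x y < 10 /\ [set (inord x : 'I_5); inord y] = val (mkV (code x y)).
Proof.
move=> Hx Hy Hxy.
have H : (code x y < 10) && (((ca (code x y) == x) && (cb (code x y) == y)) || ((ca (code x y) == y) && (cb (code x y) == x))).
  have := @all2_iota (fun x y => (x != y) ==> ((code x y < 10) && (((ca (code x y) == x) && (cb (code x y) == y)) || ((ca (code x y) == y) && (cb (code x y) == x))))) 5 5 (ltac:(by [])) x y Hx Hy.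
  by rewrite Hxy.
case/andP: H => Hc H; split => //.
rewrite val_mkV //; case/and3P: (code_ok Hc) => H1 H2 H3.
apply/eqP; rewrite set2_eq; [|by rewrite inord_eq|by rewrite inord_eq].
rewrite !inord_eq //.
by case/orP: H => /andP [/eqP -> /eqP ->]; rewrite !eqxx ?orbT.
Qed.

Lemma mkV_surj (v : Vtx) : exists2 k, k < 10 & v = mkV k.
Proof.
have := valP v; move/cards2P => [x [y [Hxy Hv]]].
have Hxy' : val x != val y by [].
have [Hc Hs] := code_spec (ltn_ord x) (ltn_ord y) Hxy'.
exists (code x y) => //; apply: val_inj; by rewrite -Hs !inord_val.
Qed.

Lemma val_actV (pi : {perm 'I_5}) (v : Vtx) : val (actV pi v) = pi @: val v.
Proof.
rewrite /actV val_insubd card_imset; last exact: perm_inj.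
by rewrite (eqP (valP v)) eqxx.
Qed.

Lemma actV_inj pi : injective (actV pi).
Proof.
move=> u w H; apply: val_inj; have := congr1 val H; rewrite !val_actV.
by move/(imset_inj (@perm_inj _ pi)).
Qed.

Lemma actVK pi v : actV pi^-1 (actV pi v) = v.
Proof.
apply: val_inj; rewrite !val_actV -imset_comp.
rewrite (eq_imset (g := id)); first by rewrite imset_id.
by move=> x /=; rewrite permK.
Qed.

Lemma actVKV pi v : actV pi (actV pi^-1 v) = v.
Proof. by rewrite -{1}(invgK pi) actVK. Qed.

Definition pa (pi : {perm 'I_5}) a : nat := val (pi (inord a)).

Lemma actV_mkV pi k : k < 10 ->
  code (pa pi (ca k)) (pa pi (cb k)) < 10 /\
  actV pi (mkV k) = mkV (code (pa pi (ca k)) (pa pi (cb k))).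
Proof.
move=> Hk; case/and3P: (code_ok Hk) => H1 H2 H3.
have Hn : pa pi (ca k) != pa pi (cb k).
  by rewrite /pa (inj_eq val_inj) (inj_eq (@perm_inj _ pi)) inord_eq.
have [Hc Hs] := code_spec (ltn_ord _) (ltn_ord _) Hn.
split => //; apply: val_inj; rewrite -Hs val_actV val_mkV // imset2 /pa !inord_val //.
Qed.

Definition rel (u w : Vtx) : nat := if u == w then 0 else if [disjoint val u & val w] then 1 else 2.
Definition relc k l : nat := if k == l then 0 else if dc k l then 1 else 2.

Lemma rel_mkV k l : k < 10 -> l < 10 -> rel (mkV k) (mkV l) = relc k l.
Proof. by move=> Hk Hl; rewrite /rel /relc eq_mkV // disj_mkV. Qed.

Lemma rel_act pi u w : rel (actV pi u) (actV pi w) = rel u w.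
Proof.
rewrite /rel (inj_eq (@actV_inj pi)) !val_actV imset_disjoint //; exact: perm_inj.
Qed.

Definition Lp (pi : {perm 'I_5}) : seq nat := [seq pa pi i | i <- iota 0 5].
Definition PL : seq (seq nat) := permutations (iota 0 5).

Lemma pa_lt pi a : pa pi a < 5.
Proof. exact: ltn_ord. Qed.

Lemma nth_Lp pi a : a < 5 -> nth 0 (Lp pi) a = pa pi a.
Proof. move=> Ha; by rewrite (nth_map 0) ?size_iota // nth_iota. Qed.

Lemma Lp_uniq pi : uniq (Lp pi).
Proof.
rewrite map_inj_in_uniq ?iota_uniq // => i j; rewrite !mem_iota /= => Hi Hj.
by rewrite /pa => /val_inj /perm_inj /(congr1 val) /=; rewrite !inordK.
Qed.

Lemma Lp_mem pi : Lp pi \in PL.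
Proof.
rewrite mem_permutations; apply: uniq_perm.
- exact: Lp_uniq.
- exact: iota_uniq.
have Hsub : {subset Lp pi <= iota 0 5}.
  by move=> x /mapP [i _ ->]; rewrite mem_iota pa_lt.
have Hsz : size (iota 0 5) <= size (Lp pi) by rewrite size_map.
by have [_ H] := uniq_min_size (Lp_uniq pi) Hsub Hsz.
Qed.

Lemma Lp_inj : injective Lp.
Proof.
move=> p q H; apply/permP => i; apply: val_inj.
have := congr1 (fun l => nth 0 l i) H; rewrite /= !nth_Lp // /pa inord_val //.
Qed.

Lemma Lp_surj l : l \in PL -> exists pi, Lp pi = l.
Proof.
rewrite mem_permutations => Hl.
have Hs : size l = 5 by rewrite (perm_size Hl) size_iota.
have Hu : uniq l by rewrite (perm_uniq Hl) iota_uniq.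
have Hlt : forall i, i < 5 -> nth 0 l i < 5.
  move=> i Hi; have : nth 0 l i \in iota 0 5 by rewrite -(perm_mem Hl) mem_nth // Hs.
  by rewrite mem_iota.
have injf : injective (fun i : 'I_5 => (inord (nth 0 l i) : 'I_5)).
  move=> i j /= /(congr1 val) /=; rewrite !inordK ?Hlt // => /eqP.
  by rewrite nth_uniq ?Hs // => /eqP /val_inj.
exists (perm injf); apply: (@eq_from_nth _ 0); first by rewrite size_map size_iota Hs.
move=> i; rewrite size_map size_iota => Hi; rewrite nth_Lp // /pa permE inordK //=; rewrite inordK //; exact: Hlt.
Qed.

Section PermSum.
Variable F : numClosedFieldType.
Local Open Scope ring_scope.

Lemma sum_perm (G : seq nat -> F) : \sum_(pi : {perm 'I_5}) G (Lp pi) = \sum_(l <- PL) G l.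
Proof.
have HU : uniq PL by apply: permutations_uniq.
have E1 : forall pi : {perm 'I_5}, G (Lp pi) = \sum_(l <- PL) (Lp pi == l)%:R * G l.
  move=> pi; rewrite (bigD1_seq (Lp pi)) ?Lp_mem //= eqxx mul1r big1 ?addr0 // => l.
  by rewrite eq_sym => /negbTE ->; rewrite mul0r.
under eq_bigr => pi _ do rewrite E1.
rewrite exchange_big /= big_seq [RHS]big_seq; apply: eq_bigr => l Hl.
have [p0 Hp0] := Lp_surj Hl.
rewrite -big_distrl /= (bigD1 p0) //= Hp0 eqxx big1 ?addr0 ?mul1r // => q Hq.
by rewrite -Hp0 (inj_eq Lp_inj) (negbTE Hq).
Qed.
End PermSum.

Definition actc (l : seq nat) k := code (nth 0 l (ca k)) (nth 0 l (cb k)).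

Lemma actV_mkV_L pi k : k < 10 -> actc (Lp pi) k < 10 /\ actV pi (mkV k) = mkV (actc (Lp pi) k).
Proof.
move=> Hk; case/and3P: (code_ok Hk) => H1 H2 H3.
by rewrite /actc !nth_Lp //; apply: actV_mkV.
Qed.

Lemma pat_inj (w v : Vtx) : rel (mkV 0) w = rel (mkV 0) v -> rel (mkV 1) w = rel (mkV 1) v ->
  rel (mkV 2) w = rel (mkV 2) v -> w = v.
Proof.
have [k Hk ->] := mkV_surj w; have [l Hl ->] := mkV_surj v.
rewrite !rel_mkV // => E0 E1 E2; congr mkV.
have := @all2_iota (fun k l => [&& relc 0 k == relc 0 l, relc 1 k == relc 1 l & relc 2 k == relc 2 l] ==> (k == l)) 10 10 (ltac:(by vm_compute)) k l Hk Hl.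
by rewrite E0 E1 E2 !eqxx /= => /eqP.
Qed.

Section Comb.
Variable F : numClosedFieldType.
Local Open Scope ring_scope.

Definition Rel (r : nat) (u w : Vtx) : F := (rel u w == r)%:R.

Definition Sfun (z1 z2 z3 : Vtx) : F :=
  Rel 2 z1 z2 * Rel 2 z1 z3 * Rel 2 z2 z3 *
  (1 - \sum_(u : Vtx) Rel 1 z1 u * Rel 1 z2 u * Rel 1 z3 u).

Definition Pv (v z1 z2 z3 y : Vtx) : F :=
  Rel (rel (mkV 0) v) z1 y * Rel (rel (mkV 1) v) z2 y * Rel (rel (mkV 2) v) z3 y.

Lemma F2 (pi : {perm 'I_5}) v y :
  Pv v (actV pi (mkV 0)) (actV pi (mkV 1)) (actV pi (mkV 2)) y = (y == actV pi v)%:R.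
Proof.
rewrite /Pv /Rel -{1 2 3}(actVKV pi y) !rel_act -!natr_and.
congr ((nat_of_bool _)%:R).
apply/idP/idP.
  case/andP => /andP [/eqP E0 /eqP E1] /eqP E2.
  by rewrite -(pat_inj E0 E1 E2) actVKV.
move/eqP => ->; by rewrite actVK !eqxx.
Qed.

Lemma sumV (G : Vtx -> F) : \sum_(u : Vtx) G u = \sum_(m < 10) G (mkV m).
Proof.
have E : forall u : Vtx, G u = \sum_(m < 10) (u == mkV m)%:R * G u.
  move=> u; have [k Hk ->] := mkV_surj u.
  rewrite (bigD1 (Ordinal Hk)) //= eqxx mul1r big1 ?addr0 // => m Hm.
  rewrite eq_mkV ?ltn_ord //.
  suff -> : (k == m) = false by rewrite mul0r.
  by apply/negbTE; move: Hm; apply: contra => /eqP E; apply/eqP/val_inj.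
under eq_bigr => u _ do rewrite E.
rewrite exchange_big /=; apply: eq_bigr => m _.
by rewrite (bigD1 (mkV m)) //= eqxx mul1r big1 ?addr0 // => u /negbTE ->; rewrite mul0r.
Qed.

Lemma sum_count (T : Type) (r : seq T) (P : pred T) : \sum_(x <- r) ((P x)%:R : F) = (count P r)%:R.
Proof. by elim: r => [|x r IH]; rewrite ?big_nil ?big_cons ?IH //= natrD. Qed.

Lemma sum_ord_count n (P : pred nat) : \sum_(m < n) ((P m)%:R : F) = (count P (iota 0 n))%:R.
Proof. by rewrite -(big_mkord xpredT (fun m => (P m)%:R)) /index_iota subn0 sum_count. Qed.

End Comb.

Lemma all3_iota (P : nat -> nat -> nat -> bool) n :
  all (fun a => all (fun b => all (P a b) (iota 0 n)) (iota 0 n)) (iota 0 n) ->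
  forall a b c, a < n -> b < n -> c < n -> P a b c.
Proof. move=> H a b c Ha Hb Hc; exact: (all_iota_lt (all2_iota H Ha Hb) Hc). Qed.

Definition F1chk k1 k2 k3 :=
  let N3 := ((relc k1 k2 == 2) && (relc k1 k3 == 2)) && (relc k2 k3 == 2) in
  let C := count (fun m => ((relc k1 m == 1) && (relc k2 m == 1)) && (relc k3 m == 1)) (iota 0 10) in
  let P := count (fun l => ((k1 == actc l 0) && (k2 == actc l 1)) && (k3 == actc l 2)) PL in
  if N3 then (C <= 1) && (P == 1 - C) else P == 0.

Lemma F1check k1 k2 k3 : k1 < 10 -> k2 < 10 -> k3 < 10 -> F1chk k1 k2 k3.
Proof. apply: all3_iota; by vm_compute. Qed.

Lemma eq_mkV_act pi k l : k < 10 -> l < 10 -> (mkV k == actV pi (mkV l)) = (k == actc (Lp pi) l).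
Proof. move=> Hk Hl; have [H1 ->] := actV_mkV_L pi Hl; by rewrite eq_mkV. Qed.

Section Comb2.
Variable F : numClosedFieldType.
Local Open Scope ring_scope.

Lemma F1 z1 z2 z3 : Sfun F z1 z2 z3 = \sum_(pi : {perm 'I_5})
  (((z1 == actV pi (mkV 0)) && (z2 == actV pi (mkV 1))) && (z3 == actV pi (mkV 2)))%:R.
Proof.
have [k1 H1 ->] := mkV_surj z1; have [k2 H2 ->] := mkV_surj z2; have [k3 H3 ->] := mkV_surj z3.
under eq_bigr => pi _ do rewrite !eq_mkV_act //.
rewrite (@sum_perm F (fun l => (((k1 == actc l 0) && (k2 == actc l 1)) && (k3 == actc l 2))%:R)) sum_count.
rewrite /Sfun /Rel !rel_mkV // sumV.
under eq_bigr => m _ do rewrite !rel_mkV ?ltn_ord // -!natr_and.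
rewrite (@sum_ord_count F 10 (fun m => ((relc k1 m == 1) && (relc k2 m == 1)) && (relc k3 m == 1))) -!natr_and.
have := F1check H1 H2 H3; rewrite /F1chk.
case: ifP => _.
  by case/andP => Hc /eqP ->; rewrite mul1r natrB.
by move/eqP => ->; rewrite mul0r.
Qed.
End Comb2.

Section Avg.
Variable F : numClosedFieldType.
Local Open Scope ring_scope.

Lemma del3 (a b c : Vtx) (h : Vtx -> Vtx -> Vtx -> F) :
  \sum_z1 \sum_z2 \sum_z3 ((((z1 == a) && (z2 == b)) && (z3 == c))%:R * h z1 z2 z3) = h a b c.
Proof.
under eq_bigr => z1 _ do under eq_bigr => z2 _ do under eq_bigr => z3 _ do rewrite !natr_and -!mulrA.
under eq_bigr => z1 _ do under eq_bigr => z2 _ do rewrite -mulr_sumr -mulr_sumr sum_delta_l.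
under eq_bigr => z1 _ do rewrite -mulr_sumr sum_delta_l.
by rewrite sum_delta_l.
Qed.

Lemma triple_delta (A B C : {perm 'I_5} -> Vtx) (h : Vtx -> Vtx -> Vtx -> F) :
  \sum_z1 \sum_z2 \sum_z3 ((\sum_(pi : {perm 'I_5}) (((z1 == A pi) && (z2 == B pi)) && (z3 == C pi))%:R) * h z1 z2 z3)
  = \sum_(pi : {perm 'I_5}) h (A pi) (B pi) (C pi).
Proof.
under eq_bigr => z1 _ do under eq_bigr => z2 _ do under eq_bigr => z3 _ do rewrite mulr_suml.
under eq_bigr => z1 _ do under eq_bigr => z2 _ do rewrite exchange_big.
under eq_bigr => z1 _ do rewrite exchange_big.
rewrite exchange_big; apply: eq_bigr => pi _; exact: del3.
Qed.

Lemma prod_natb n (P : 'I_n -> bool) : \prod_(j < n) ((P j)%:R : F) = ([forall j, P j])%:R.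
Proof.
case: (boolP [forall j, P j]) => [/forallP H | /forallPn [j Hj]].
  by rewrite big1 // => j _; rewrite H.
by rewrite (bigD1 j) //= (negbTE Hj) mul0r.
Qed.

Definition Yv n (x : n.-tuple Vtx) (ys : seq Vtx) : F :=
  \sum_z1 \sum_z2 \sum_z3 (Sfun F z1 z2 z3 * \prod_(j < n) Pv F (tnth x j) z1 z2 z3 (nth v0 ys j)).

Lemma Yv_eq n (x y : n.-tuple Vtx) :
  Yv x y = \sum_(pi : {perm 'I_5}) (y == [tuple of map (actV pi) x])%:R.
Proof.
rewrite /Yv.
under eq_bigr => z1 _ do under eq_bigr => z2 _ do under eq_bigr => z3 _ do rewrite F1.
rewrite (triple_delta (fun pi => actV pi (mkV 0)) (fun pi => actV pi (mkV 1)) (fun pi => actV pi (mkV 2))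
  (fun z1 z2 z3 => \prod_(j < n) Pv F (tnth x j) z1 z2 z3 (nth v0 y j))).
apply: eq_bigr => pi _.
under eq_bigr => j _ do rewrite F2 -tnth_nth.
rewrite prod_natb eqEtuple; congr ((nat_of_bool _)%:R); apply: eq_forallb => j.
by rewrite tnth_map.
Qed.

Lemma orbit_avg n (t : tensor F n) : fixedS5 t -> forall y : n.-tuple Vtx,
  \sum_(x : n.-tuple Vtx) t x * Yv x y = t y *+ 120.
Proof.
move=> Ht y.
under eq_bigr => x _ do rewrite Yv_eq mulr_sumr.
rewrite exchange_big /=.
have E : forall pi : {perm 'I_5}, \sum_(x : n.-tuple Vtx) t x * (y == [tuple of map (actV pi) x])%:R = t y.
  move=> pi; set x0 := [tuple of map (actV pi^-1) y].
  have -> : t y = t x0 by rewrite /x0 Ht.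
  rewrite -(sum_delta x0); apply: eq_bigr => x _; congr (_ * (nat_of_bool _)%:R).
  rewrite /x0; apply/eqP/eqP => [->|->]; apply: val_inj => /=; rewrite -map_comp.
    by rewrite map_id_in // => v _ /=; rewrite actVK.
  by rewrite map_id_in // => v _ /=; rewrite actVKV.
under eq_bigr => pi _ do rewrite E.
by rewrite sumr_const card_Sn.
Qed.
End Avg.

Section Fix.
Variable F : numClosedFieldType.
Local Open Scope ring_scope.

Lemma fixed_ffun n (f : seq Vtx -> F) :
  (forall pi (w : n.-tuple Vtx), f (map (actV pi) w) = f w) -> fixedS5 [ffun w : n.-tuple Vtx => f w].
Proof. by move=> H pi w; rewrite !ffunE /= H. Qed.

Lemma tf_inv n (t : tensor F n) pi l : fixedS5 t -> size l = n -> tf t (map (actV pi) l) = tf t l.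
Proof.
move=> Ht Hl; rewrite /tf -[RHS](Ht pi); congr (t _); apply: val_inj.
have E1 := mktuple_nth_seq v0 (n:=n) (s := map (actV pi) l) (ltac:(by rewrite size_map)).
have E2 := mktuple_nth_seq v0 (n:=n) (s := l) Hl.
rewrite E1 /=; congr map; exact: (esym E2).
Qed.

Lemma fixed_closed : closed_family (fun n (t : tensor F n) => fixedS5 t).
Proof.
split.
- by move=> n pi w; rewrite !ffunE.
- by move=> n s t Hs Ht pi w; rewrite !ffunE Hs Ht.
- by move=> n c t Ht pi w; rewrite !ffunE Ht.
- by move=> pi w; rewrite !ffunE.
- move=> n m s t Hs Ht; rewrite -(tfK s) -(tfK t) E_prod.
  apply: (fixed_ffun (f := fun l => tf s (take n l) * tf t (drop n l))) => pi w /=.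
  have E1 : size (take n w) = n by rewrite size_take size_tuple; case: ltnP; lia.
  have E2 : size (drop n w) = m by rewrite size_drop size_tuple; lia.
  by rewrite -map_take -map_drop tf_inv // tf_inv.
- move=> n k t Hk Ht; rewrite -(tfK t) E_contr //.
  apply: (fixed_ffun (f := fun l => \sum_(u : Vtx) tf t (take k l ++ u :: u :: drop k l))) => pi w /=.
  rewrite (reindex_inj (@actV_inj pi)) /=; apply: eq_bigr => u _.
  rewrite -map_take -map_drop -(map_cons _ u) -(map_cons _ u) -map_cat tf_inv //.
  rewrite size_cat /= size_take size_drop size_tuple; case: ltnP; lia.
- move=> n t Ht; rewrite -(tfK t) E_rot.
  apply: (fixed_ffun (f := fun l => tf t (rotr 1 l))) => pi w /=.
  by rewrite -map_rotr tf_inv // size_rotr size_tuple.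
Qed.

Lemma fixed_GHZ : fixedS5 (GHZ F).
Proof. move=> pi w; by rewrite !ffunE !tnth_map !(inj_eq (@actV_inj pi)). Qed.

Lemma fixed_Rtr : fixedS5 (Rtr F).
Proof. move=> pi w; by rewrite !ffunE !tnth_map !(inj_eq (@actV_inj pi)). Qed.

End Fix.

Section Build.
Variable F : numClosedFieldType.
Variable Q : forall n, tensor F n -> Prop.
Hypothesis HQ : closed_family Q.
Hypothesis HP : forall s : tensor F 2, fixedS5 s -> @Q 2 s.
Hypothesis HG : @Q 3 (GHZ F).
Hypothesis HR : @Q 4 (Rtr F).
Local Open Scope ring_scope.

Lemma QF_Rel r : QF Q 2 (fun s => Rel F r (nth v0 s 0) (nth v0 s 1)).
Proof.
apply: HP; apply: (fixed_ffun (f := fun s => Rel F r (nth v0 s 0) (nth v0 s 1))) => pi w.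
by rewrite !(nth_map v0) ?size_tuple // /Rel rel_act.
Qed.

Lemma QF_Rel_at N r i j : (i < N)%N -> (j < N)%N -> QF Q N (fun s => Rel F r (nth v0 s i) (nth v0 s j)).
Proof. move=> Hi Hj; exact: (place2 HQ HG HR (G := Rel F r) Hi Hj (QF_Rel r)). Qed.

Lemma QF_S : QF Q 3 (fun s => Sfun F (nth v0 s 0) (nth v0 s 1) (nth v0 s 2)).
Proof.
have C4 := QF_mul HQ HG HR (QF_mul HQ HG HR (@QF_Rel_at 4 1 0 3 (ltac:(by [])) (ltac:(by [])))
  (@QF_Rel_at 4 1 1 3 (ltac:(by [])) (ltac:(by []))))
  (@QF_Rel_at 4 1 2 3 (ltac:(by [])) (ltac:(by []))).
have C3 := sumlast HQ HG C4.
have OneC := QF_add HQ (QF_const HQ HG 3 1) (QF_scale HQ (-1) C3).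
have R3 := QF_mul HQ HG HR (QF_mul HQ HG HR (QF_mul HQ HG HR
  (@QF_Rel_at 3 2 0 1 (ltac:(by [])) (ltac:(by [])))
  (@QF_Rel_at 3 2 0 2 (ltac:(by [])) (ltac:(by []))))
  (@QF_Rel_at 3 2 1 2 (ltac:(by [])) (ltac:(by [])))) OneC.
apply: QF_ext R3 => s Hs; rewrite /Sfun mulN1r; congr (_ * (1 - _)).
apply: eq_bigr => u _; rewrite !nth_rcons Hs /=; done.
Qed.

Lemma QF_Y n (x : n.-tuple Vtx) : QF Q n (Yv F x).
Proof.
have HS := place3 HQ HG HR (G := Sfun F) (N := n.+3) (i := n) (j := n.+1) (k := n.+2)
  (ltac:(lia)) (ltac:(lia)) (ltac:(lia)) QF_S.
have HPv : forall j : 'I_n, QF Q n.+3 (fun s => Pv F (tnth x j) (nth v0 s n) (nth v0 s n.+1) (nth v0 s n.+2) (nth v0 s j)).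
  move=> j; have Hj : (j < n.+3)%N by have := ltn_ord j; lia.
  have := QF_mul HQ HG HR (QF_mul HQ HG HR
    (@QF_Rel_at n.+3 (rel (mkV 0) (tnth x j)) n j (ltac:(lia)) Hj)
    (@QF_Rel_at n.+3 (rel (mkV 1) (tnth x j)) n.+1 j (ltac:(lia)) Hj))
    (@QF_Rel_at n.+3 (rel (mkV 2) (tnth x j)) n.+2 j (ltac:(lia)) Hj).
  by apply: QF_ext.
have HPi := QF_bigprod HQ HG HR (index_enum 'I_n) HPv.
have HW := QF_mul HQ HG HR HS HPi.
have H1 := sumlast HQ HG HW.
have H2 := sumlast HQ HG H1.
have H3 := sumlast HQ HG H2.
apply: QF_ext H3 => s Hs; rewrite /Yv.
apply: eq_bigr => u1 _; apply: eq_bigr => u2 _; apply: eq_bigr => u3 _.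
have -> : rcons (rcons (rcons s u1) u2) u3 = s ++ [:: u1; u2; u3] by rewrite -!cats1 -!catA.
have E0 : nth v0 (s ++ [:: u1; u2; u3]) n = u1 by rewrite -Hs nth_cat_sz0.
have E1 : nth v0 (s ++ [:: u1; u2; u3]) n.+1 = u2 by rewrite -Hs nth_cat_sz1.
have E2 : nth v0 (s ++ [:: u1; u2; u3]) n.+2 = u3 by rewrite -Hs nth_cat_sz2.
rewrite E0 E1 E2; congr (_ * _).
apply: eq_bigr => j _; rewrite nth_cat_lt // Hs; exact: ltn_ord.
Qed.

Lemma main_fixed n (t : tensor F n) : fixedS5 t -> @Q n t.
Proof.
move=> Ht.
have H := QF_scale HQ (120%:R)^-1 (QF_bigsum HQ (index_enum (n.-tuple Vtx)) (fun x => QF_scale HQ (t x) (QF_Y x))).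
move: H; rewrite /QF; congr (@Q n _); apply/ffunP => w; rewrite ffunE.
rewrite (orbit_avg Ht w) -[t w *+ 120]mulr_natl mulrA mulVf ?mul1r //.
by rewrite pnatr_eq0.
Qed.
End Build.

Theorem theorem5p3 (F : numClosedFieldType) :
  (forall (n : nat) (t : tensor F n), genQ t <-> fixedS5 t) <-> genQ (Rtr F).
Proof.
split.
  move=> H; apply/H; exact: fixed_Rtr.
move=> HRg n t; split.
  move=> Hg; apply: (Hg (fun n t => fixedS5 t)).
  - exact: fixed_closed.
  - by move=> s Hs.
  - exact: fixed_GHZ.
move=> Ht Q HQ HP HG; have HR := HRg Q HQ HP HG.
exact: main_fixed HQ HP HG HR n t Ht.
Qed.
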